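(* $\mathrm{mdim}_{\mathbb{C}}(G_2)=8$ and $\mathrm{mdim}_{\mathbb{R}}(G_2)=16$. Moreover, a faithful real representation of $G_2$ of minimal dimension $16$ may be obtained by restriction of scalars from a faithful complex representation of $G_2$.
   Context: The $2\times2\times2$ Rubik's cube consists of 8 corner cubelets, each carrying 3 colored stickers (24 stickers in all). Corner positions are numbered 1 = top-front-left, 2 = top-front-right, 3 = top-back-left, 4 = top-back-right, 5 = bottom-front-left, 6 = bottom-front-right, 7 = bottom-back-left, 8 = bottom-back-right. $G_2$ is the subgroup of the symmetric group on the 24 stickers generated by the six moves $u,d,f,b,l,r$, which rotate respectively the top, bottom, front, back, left, right layer of four cubelets by $90^\circ$ clockwise as seen by an observer outside the cube facing that face, leaving the other four cubelets fixed. For a finite group $G$ and field $F$, $\mathrm{mdim}_F(G)$ is the smallest dimension of a faithful representation of $G$ over $F$. *)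

(* Defs.v *)
From HB Require Import structures.
From mathcomp Require Import all_boot all_order all_algebra all_fingroup.
From mathcomp Require Import mxrepresentation.
From mathcomp Require Import complex.
From mathcomp Require Import Rstruct.

Set Implicit Arguments.
Unset Strict Implicit.
Unset Printing Implicit Defensive.
Import GRing.Theory Num.Theory.
Local Open Scope ring_scope.

(* Coordinates: axis 0 = x (right = +1, left = -1),
                axis 1 = y (top = +1, bottom = -1),
                axis 2 = z (front = +1, back = -1)   (right-handed frame).
   A corner cubelet sits at a point of {-1,1}^3, coded by three booleans
   (true = +1).  A sticker is a pair (corner, axis a): the sticker of that
   corner lying on the face perpendicular to axis a. 8 * 3 = 24 stickers. *)
Definition sticker : finType := ((bool * bool * bool) * 'I_3)%type.

Definition vec3 := (int * int * int)%type.

Definition sgnb (b : bool) : int := if b then 1 else -1.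

Definition coord (v : vec3) (a : 'I_3) : int :=
  match val a with 0 => v.1.1 | 1 => v.1.2 | _ => v.2 end.

Definition basis (a : 'I_3) (s : int) : vec3 :=
  match val a with 0 => (s, 0, 0) | 1 => (0, s, 0) | _ => (0, 0, s) end.

Definition dot (u v : vec3) : int := u.1.1 * v.1.1 + u.1.2 * v.1.2 + u.2 * v.2.
Definition cross (n v : vec3) : vec3 :=
  (n.1.2 * v.2 - n.2 * v.1.2, n.2 * v.1.1 - n.1.1 * v.2,
   n.1.1 * v.1.2 - n.1.2 * v.1.1).
Definition vscale (k : int) (v : vec3) : vec3 := (k * v.1.1, k * v.1.2, k * v.2).
Definition vsub (u v : vec3) : vec3 := (u.1.1 - v.1.1, u.1.2 - v.1.2, u.2 - v.2).

(* Rotation by -90 degrees about the unit vector n (Rodrigues' formula),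
   i.e. a quarter turn clockwise as seen from the tip of n looking back
   at the origin:  R v = (n.v) n - n x v. *)
Definition rotcw (n v : vec3) : vec3 := vsub (vscale (dot n v) n) (cross n v).

Definition corner_vec (c : bool * bool * bool) : vec3 :=
  (sgnb c.1.1, sgnb c.1.2, sgnb c.2).
Definition sticker_normal (s : sticker) : vec3 :=
  basis s.2 (coord (corner_vec s.1) s.2).

Definition vec_corner (v : vec3) : bool * bool * bool :=
  (0 < v.1.1, 0 < v.1.2, 0 < v.2).
Definition ax0 : 'I_3 := @Ordinal 3 0 isT.
Definition ax1 : 'I_3 := @Ordinal 3 1 isT.
Definition ax2 : 'I_3 := @Ordinal 3 2 isT.
Definition vec_axis (v : vec3) : 'I_3 :=
  if v.1.1 != 0 then ax0 else if v.1.2 != 0 then ax1 else ax2.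

(* The face move perpendicular to axis a on the side sg (true = +): the
   four cubelets of that layer are rotated by 90 degrees clockwise as seen
   by an observer outside the cube facing that face; other stickers fixed. *)
Definition move_fun (a : 'I_3) (sg : bool) (s : sticker) : sticker :=
  let n := basis a (sgnb sg) in
  if coord (corner_vec s.1) a == sgnb sg then
    (vec_corner (rotcw n (corner_vec s.1)), vec_axis (rotcw n (sticker_normal s)))
  else s.

Lemma move_fun4 a sg s :
  move_fun a sg (move_fun a sg (move_fun a sg (move_fun a sg s))) = s.
Proof.
apply/eqP; case: a => -[|[|[|//]]] ? ; case: sg;
  case: s => -[[[] []] []] -[[|[|[|//]]] ?]; vm_compute; reflexivity.
Qed.

Lemma move_fun_inj a sg : injective (move_fun a sg).
Proof.
apply: (can_inj (g := fun s => move_fun a sg (move_fun a sg (move_fun a sg s)))).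
exact: move_fun4.
Qed.

Definition move (a : 'I_3) (sg : bool) : {perm sticker} := perm (@move_fun_inj a sg).

Definition mu := move (ax1) true.
Definition md := move (ax1) false.
Definition mf := move (ax2) true.
Definition mb := move (ax2) false.
Definition ml := move (ax0) false.
Definition mr := move (ax0) true.

Definition G2 : {group {perm sticker}} :=
  <<[set mu; md; mf; mb; ml; mr]>>%G.

Definition has_faithful_rep (F : fieldType) (gT : finGroupType)
    (G : {group gT}) (n : nat) : Prop :=
  exists rG : mx_representation F G n, mx_faithful rG.

Definition is_mdim (F : fieldType) (gT : finGroupType) (G : {group gT})
    (n : nat) : Prop :=
  has_faithful_rep F G n /\ forall m, (m < n)%N -> ~ has_faithful_rep F G m.

Notation RR := Rdefinitions.R.
Notation CC := (complex Rdefinitions.R).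

(* Restriction of scalars C -> R on matrices, w.r.t. the real basis
   (e_1, ..., e_n, i e_1, ..., i e_n) of C^n:  A = X + iY  |->  [X -Y; Y X]. *)
Definition realify_mx n (A : 'M[CC]_n) : 'M[RR]_(n + n) :=
  let X := map_mx (@complex.Re RR) A in
  let Y := map_mx (@complex.Im RR) A in
  block_mx X (- Y) Y X.

(* Main.v *)
Require Import Defs.
From HB Require Import structures.
From mathcomp Require Import all_boot all_order all_algebra all_fingroup.
From mathcomp Require Import mxrepresentation complex Rstruct ring.

Set Implicit Arguments.
Unset Strict Implicit.
Unset Printing Implicit Defensive.

Definition gen_list : seq ('I_3 * bool) :=
  [:: (ax1, true); (ax1, false); (ax2, true); (ax2, false); (ax0, false); (ax0, true)].
Definition gm (i : nat) : 'I_3 * bool := nth (ax0, true) gen_list i.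
Definition wapply (w : seq nat) (s : sticker) : sticker :=
  foldl (fun s i => move_fun (gm i).1 (gm i).2 s) s w.
Definition wp (w : seq nat) : {perm sticker} := (\prod_(i <- w) move (gm i).1 (gm i).2)%g.

Lemma wpE w s : wp w s = wapply w s.
Proof.
elim: w s => [|i w IH] s; first by rewrite /wp big_nil perm1.
by rewrite /wp big_cons permM -/(wp w) IH permE.
Qed.

Definition stk : seq sticker :=
  [seq (c, a) | c <- [:: (false,false,false); (false,false,true); (false,true,false); (false,true,true);
                        (true,false,false); (true,false,true); (true,true,false); (true,true,true)],
                a <- [:: ax0; ax1; ax2]].
Lemma stkP s : s \in stk.
Proof. by case: s => -[[[] []] []] -[[|[|[|//]]] ?]; vm_compute. Qed.

Definition weq w1 w2 := all (fun s => wapply w1 s == wapply w2 s) stk.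
Lemma weqP w1 w2 : weq w1 w2 -> wp w1 = wp w2.
Proof. move=> /allP H; apply/permP => s; rewrite !wpE; apply/eqP/H/stkP. Qed.

Lemma gm_in i : move (gm i).1 (gm i).2 \in G2.
Proof.
apply: mem_gen; rewrite /gm.
do 6 (case: i => [|i]; first by rewrite /= !inE eqxx ?orbT).
by rewrite nth_default //= !inE eqxx ?orbT.
Qed.

Lemma wp_in w : wp w \in G2.
Proof. rewrite /wp; elim: w => [|i w IH]; first by rewrite big_nil group1.
by rewrite big_cons groupM // gm_in. Qed.

Lemma wp_cat w1 w2 : wp (w1 ++ w2) = (wp w1 * wp w2)%g.
Proof. by rewrite /wp big_cat. Qed.
Definition xw_list : seq (seq nat) := [::
  [:: 2; 2; 2; 1; 1; 1; 0; 0; 1; 2; 3; 4; 0; 0; 1; 2; 3; 4; 0; 0; 1; 2; 3; 4; 0; 0; 1; 2; 3; 4; 1; 2];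
  [:: 2; 2; 2; 5; 5; 5; 0; 0; 1; 2; 3; 4; 0; 0; 1; 2; 3; 4; 0; 0; 1; 2; 3; 4; 0; 0; 1; 2; 3; 4; 5; 2];
  [:: 4; 4; 4; 2; 2; 2; 1; 1; 1; 0; 0; 1; 2; 3; 4; 0; 0; 1; 2; 3; 4; 0; 0; 1; 2; 3; 4; 0; 0; 1; 2; 3; 4; 1; 2; 4];
  [:: 2; 2; 2; 1; 1; 1; 1; 1; 1; 0; 0; 1; 2; 3; 4; 0; 0; 1; 2; 3; 4; 0; 0; 1; 2; 3; 4; 0; 0; 1; 2; 3; 4; 1; 1; 2];
  [:: 2; 2; 2; 0; 0; 1; 2; 3; 4; 0; 0; 1; 2; 3; 4; 0; 0; 1; 2; 3; 4; 0; 0; 1; 2; 3; 4; 2];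
  [:: 5; 5; 5; 2; 2; 2; 2; 2; 2; 0; 0; 1; 2; 3; 4; 0; 0; 1; 2; 3; 4; 0; 0; 1; 2; 3; 4; 0; 0; 1; 2; 3; 4; 2; 2; 5];
  [:: 3; 3; 3; 2; 2; 2; 0; 0; 1; 2; 3; 4; 0; 0; 1; 2; 3; 4; 0; 0; 1; 2; 3; 4; 0; 0; 1; 2; 3; 4; 2; 3]].
Definition tmat : seq (seq (seq nat)) := [::
  [:: [:: 1; 0; 0; 0; 0; 0; 2]; [:: 0; 1; 0; 0; 0; 0; 2]; [:: 0; 0; 0; 1; 0; 0; 2]; [:: 0; 0; 0; 0; 0; 0; 2]; [:: 0; 0; 0; 0; 1; 0; 2]; [:: 0; 0; 0; 0; 0; 1; 2]; [:: 0; 0; 1; 0; 0; 0; 2]];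
  [:: [:: 0; 0; 0; 0; 1; 0; 0]; [:: 1; 0; 0; 0; 0; 0; 0]; [:: 0; 0; 1; 0; 0; 0; 0]; [:: 0; 0; 0; 1; 0; 0; 0]; [:: 0; 0; 0; 0; 0; 1; 0]; [:: 0; 1; 0; 0; 0; 0; 0]; [:: 0; 0; 0; 0; 0; 0; 1]];
  [:: [:: 1; 0; 0; 2; 0; 0; 0]; [:: 0; 0; 0; 2; 0; 1; 0]; [:: 0; 0; 1; 2; 0; 0; 0]; [:: 0; 1; 0; 2; 0; 0; 0]; [:: 0; 0; 0; 2; 1; 0; 0]; [:: 0; 0; 0; 2; 0; 0; 0]; [:: 0; 0; 0; 2; 0; 0; 1]];
  [:: [:: 0; 0; 1; 0; 0; 0; 0]; [:: 0; 1; 0; 0; 0; 0; 0]; [:: 0; 0; 0; 0; 0; 0; 1]; [:: 0; 0; 0; 1; 0; 0; 0]; [:: 1; 0; 0; 0; 0; 0; 0]; [:: 0; 0; 0; 0; 0; 1; 0]; [:: 0; 0; 0; 0; 1; 0; 0]];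
  [:: [:: 0; 1; 0; 0; 0; 0; 0]; [:: 0; 0; 0; 1; 0; 0; 0]; [:: 1; 0; 0; 0; 0; 0; 0]; [:: 0; 0; 1; 0; 0; 0; 0]; [:: 0; 0; 0; 0; 1; 0; 0]; [:: 0; 0; 0; 0; 0; 1; 0]; [:: 0; 0; 0; 0; 0; 0; 1]];
  [:: [:: 1; 0; 0; 0; 0; 2; 0]; [:: 0; 1; 0; 0; 0; 2; 0]; [:: 0; 0; 1; 0; 0; 2; 0]; [:: 0; 0; 0; 1; 0; 2; 0]; [:: 0; 0; 0; 0; 0; 2; 1]; [:: 0; 0; 0; 0; 1; 2; 0]; [:: 0; 0; 0; 0; 0; 2; 0]]].
Definition xw (c : nat) := nth [::] xw_list c.
Definition ywd (g c : nat) : seq nat :=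
  flatten [seq flatten (nseq (nth 0 (nth [::] (nth [::] tmat g) c) j) (xw j)) | j <- iota 0 7].
Definition conj_check := all (fun g => all (fun c => weq (g :: xw c) (ywd g c ++ [:: g])) (iota 0 7)) (iota 0 6).
Lemma conj_checkT : conj_check. Proof. vm_compute. reflexivity. Qed.
Definition cube_check := all (fun c => weq (xw c ++ xw c ++ xw c) [::]) (iota 0 7).
Lemma cube_checkT : cube_check. Proof. vm_compute. reflexivity. Qed.
Definition comm_check := all (fun c => all (fun d => weq (xw c ++ xw d) (xw d ++ xw c)) (iota 0 7)) (iota 0 7).
Lemma comm_checkT : comm_check. Proof. vm_compute. reflexivity. Qed.
Lemma x0_ne1 : wapply (xw 0) ((false,false,false), ax0) != ((false,false,false), ax0).
Proof. vm_compute. reflexivity. Qed.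

Definition tm (g c j : nat) := nth 0 (nth [::] (nth [::] tmat g) c) j.
Definition act (g : nat) (k : seq nat) : seq nat :=
  [seq (sumn [seq tm g c j * nth 0 k j | j <- iota 0 7]) %% 3 | c <- iota 0 7].
Definition actw (w : seq nat) k := foldl (fun k g => act g k) k w.
Definition W14 : seq (seq nat) := [:: [:: 3; 1]; [:: 0; 0; 4]; [:: 1; 3; 2]; [:: 1; 5; 1]; [:: 1; 5; 5]; [:: 2; 1; 5]; [:: 2; 2; 0]; [:: 3; 0; 0]; [:: 3; 4; 3]; [:: 4; 1; 1]; [:: 4; 2; 2]; [:: 4; 4; 2]; [:: 5; 0; 5]; [:: 5; 3; 3]].
Definition negk (k : seq nat) := [seq (2 * x) %% 3 | x <- k].
Fixpoint allL n : seq (seq nat) :=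
  if n is n'.+1 then flatten [seq [seq a :: l | l <- allL n'] | a <- iota 0 3] else [:: [::]].
Definition comb_check := all (fun k => (k == nseq 7 0) ||
  (let I := [seq actw w k | w <- W14] in (8 <= size (undup I)) && (16 <= size (undup (I ++ map negk I))))) (allL 7).
Lemma comb_checkT : comb_check. Proof. vm_compute. reflexivity. Qed.

Import GRing.Theory Num.Theory.
Local Open Scope ring_scope.

Definition s3 : RR := Num.sqrt 3.
Definition om : CC := Complex (- 2^-1) (s3 / 2).
Definition om' : CC := Complex (- 2^-1) (- (s3 / 2)).
Lemma s3sq : s3 * s3 = 3.
Proof. by rewrite -expr2 sqr_sqrtr // ler0n. Qed.

Lemma om2 : om * om = om'.
Proof.
rewrite /om /om' -[(_ +i* _)%C * (_ +i* _)%C]/(_ +i* _)%C.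
have h2 : (2 : RR) != 0 by rewrite pnatr_eq0.
congr Complex; last by field.

have -> : s3 / 2 * (s3 / 2) = (s3 * s3) / 4 by field.
by rewrite s3sq; field.
Qed.

Lemma om3 : om * om' = 1.
Proof.
rewrite /om /om' -[(_ +i* _)%C * (_ +i* _)%C]/(_ +i* _)%C.
have h2 : (2 : RR) != 0 by rewrite pnatr_eq0.
congr Complex; last by field.

have -> : s3 / 2 * - (s3 / 2) = - ((s3 * s3) / 4) by field.
by rewrite s3sq; field.
Qed.

Lemma om_sum : om' + om + 1 = 0.
Proof.
change (Complex (- 2^-1 + - 2^-1 + 1) (- (s3/2) + s3/2 + 0) = Complex 0 0).
have h2 : (2 : RR) != 0 by rewrite pnatr_eq0.
by congr Complex; field.
Qed.

Lemma conj_om : conjc om = om'.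
Proof. by []. Qed.

Lemma om_ne1 : om != 1.
Proof.
apply/eqP => -[h _].
have : (- 2^-1 : RR) < 0 by rewrite oppr_lt0 invr_gt0 ltr0n.
by rewrite h ltr10.
Qed.

Import GRing.Theory Num.Theory.
Local Open Scope ring_scope.

Lemma om3' : om ^+ 3 = 1.
Proof. by rewrite exprS expr2 om2 om3. Qed.

Lemma om_mod a : om ^+ a = om ^+ (a %% 3).
Proof. by rewrite {1}(divn_eq a 3) exprD mulnC exprM om3' expr1n mul1r. Qed.

Definition X n (rho : mx_representation CC G2 n) c := rho (wp (xw c)).
Definition eigk n (rho : mx_representation CC G2 n) (v : 'rV[CC]_n) (k : seq nat) :=
  all (fun c => v *m X rho c == om ^+ nth 0%N k c *: v) (iota 0%N 7).

Lemma rho_cat n (rho : mx_representation CC G2 n) w1 w2 :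
  rho (wp (w1 ++ w2)) = rho (wp w1) *m rho (wp w2).
Proof. by rewrite wp_cat repr_mxM // wp_in. Qed.

Lemma rho_nil n (rho : mx_representation CC G2 n) : rho (wp [::]) = 1%:M.
Proof. by rewrite /wp big_nil repr_mx1. Qed.

Lemma eig_nseq n (rho : mx_representation CC G2 n) (v : 'rV[CC]_n) c a t :
  v *m X rho c = om ^+ a *: v ->
  v *m rho (wp (flatten (nseq t (xw c)))) = om ^+ (t * a)%N *: v.
Proof.
move=> H; elim: t => [|t IH]; first by rewrite /= rho_nil mulmx1 mul0n expr0 scale1r.
rewrite /= rho_cat mulmxA -/(X rho c) H -scalemxAl IH scalerA -exprD mulSn.
by [].
Qed.

Lemma eig_flat n (rho : mx_representation CC G2 n) (v : 'rV[CC]_n) (F : nat -> seq nat) (f : nat -> nat) l :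
  (forall j, j \in l -> v *m rho (wp (F j)) = om ^+ f j *: v) ->
  v *m rho (wp (flatten [seq F j | j <- l])) = om ^+ sumn [seq f j | j <- l] *: v.
Proof.
elim: l => [|j l IH] H; first by rewrite /= rho_nil mulmx1 expr0 scale1r.
rewrite /= rho_cat mulmxA H ?mem_head // -scalemxAl IH.
  by rewrite scalerA -exprD.
by move=> i il; apply: H; rewrite inE il orbT.
Qed.

Lemma conj_at g c : (g < 6)%N -> (c < 7)%N -> wp (g :: xw c) = wp (ywd g c ++ [:: g]).
Proof.
move=> hg hc; apply: weqP.
have /allP := conj_checkT => /(_ g); rewrite mem_iota add0n => /(_ hg) /allP /(_ c).
by rewrite mem_iota add0n => /(_ hc).
Qed.

Lemma act_eig n (rho : mx_representation CC G2 n) (v : 'rV[CC]_n) k g :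
  (g < 6)%N -> eigk rho v k -> eigk rho (v *m rho (wp [:: g])) (act g k).
Proof.
move=> hg /allP H; apply/allP => c; rewrite mem_iota add0n => hc.
rewrite /X -mulmxA -rho_cat cat1s conj_at // rho_cat mulmxA.
rewrite /ywd (eig_flat (f := fun j => (tm g c j * nth 0%N k j)%N)).
  rewrite -scalemxAl /act (nth_map 0%N) ?size_iota // nth_iota // add0n.
  by rewrite -om_mod.
move=> j; rewrite mem_iota add0n => hj; apply: eig_nseq.
by apply/eqP/H; rewrite mem_iota add0n.
Qed.

Lemma actw_eig n (rho : mx_representation CC G2 n) (v : 'rV[CC]_n) k w :
  all (fun g => g < 6)%N w -> eigk rho v k -> eigk rho (v *m rho (wp w)) (actw w k).
Proof.
elim: w v k => [|g w IH] v k /=; first by rewrite rho_nil mulmx1.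
case/andP => hg hw Hv.
have -> : wp (g :: w) = wp ([:: g] ++ w) by [].
by rewrite rho_cat mulmxA; apply: IH => //; apply: act_eig.
Qed.

Lemma nz_mulrho n (rho : mx_representation CC G2 n) (v : 'rV_n) w :
  v != 0 -> v *m rho (wp w) != 0.
Proof.
move=> hv; apply: contraNneq hv => h.
by rewrite -(mulmxK (repr_mx_unit rho (wp_in w)) v) h mul0mx.
Qed.

Import GRing.Theory Num.Theory.
Local Open Scope ring_scope.

Lemma om2' : om ^+ 2 = om'.
Proof. by rewrite expr2 om2. Qed.

Lemma step' n (M : 'M[CC]_n) (w : 'rV_n) :
  w != 0 -> w *m (M *m M + M + 1%:M) = 0 ->
  exists Q : 'M_n, (forall N, N *m M = M *m N -> N *m Q = Q *m N) /\ w *m Q != 0 /\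
  exists j, [/\ (0 < j)%N, (j < 3)%N & (w *m Q) *m M = om ^+ j *: (w *m Q)].
Proof.
move=> hw hQ1.
have e1 : w *m M *m M = - (w *m M) - w.
  have h : w *m M *m M + w *m M + w = 0 by rewrite -hQ1 !mulmxDr mulmx1 mulmxA.
  by rewrite -[w *m M *m M](addrK (w *m M + w)) addrA h sub0r opprD.
case: (eqVneq (w *m (M - om'%:M)) 0) => h2.
  exists 1%:M; split; first by move=> N _; rewrite mulmx1 mul1mx.
  rewrite mulmx1; split => //; exists 2%N; split => //.
  move/eqP: h2; rewrite mulmxBr mul_mx_scalar subr_eq0 => /eqP ->.
  by rewrite om2'.
exists (M - om'%:M); split.
  by move=> N hN; rewrite mulmxBr mulmxBl hN scalar_mxC.
split => //; exists 1%N; split => //.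
rewrite mulmxBr mul_mx_scalar mulmxBl e1 -scalemxAl expr1 scalerBr scalerA om3 scale1r.
have -> : - (w *m M) - w - om' *: (w *m M) = (- (om' + 1)) *: (w *m M) - w.
  by rewrite scaleNr scalerDl scale1r opprD addrAC; congr (_ + _); rewrite addrC.
have e : - (om' + 1) = om.
  by apply: (addIr (om' + 1)); rewrite addNr addrA (addrC om) om_sum.
by rewrite e.
Qed.

Lemma step n (M : 'M[CC]_n) (w : 'rV_n) :
  M *m M *m M = 1%:M -> w != 0 ->
  exists Q : 'M_n, (forall N, N *m M = M *m N -> N *m Q = Q *m N) /\ w *m Q != 0 /\
  exists j, (j < 3)%N /\ (w *m Q) *m M = om ^+ j *: (w *m Q).
Proof.
move=> h3 hw.
case: (eqVneq (w *m (M *m M + M + 1%:M)) 0) => h1.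
  have [Q [HQ [hQ [j [_ hj hj']]]]] := step' hw h1.
  by exists Q; split => //; split => //; exists j.
exists (M *m M + M + 1%:M); split.
  move=> N hN; rewrite !mulmxDr !mulmxDl mulmx1 mul1mx !mulmxA hN -!mulmxA hN.
  by [].
split => //; exists 0%N; split => //.
rewrite expr0 scale1r -mulmxA !mulmxDl mul1mx h3.
by rewrite -addrA addrC.
Qed.

Import GRing.Theory Num.Theory.
Local Open Scope ring_scope.

Lemma refine n (Ms : nat -> 'M[CC]_n) (L : seq nat) (w : 'rV_n) :
  (forall c, Ms c *m Ms c *m Ms c = 1%:M) ->
  (forall c d, Ms c *m Ms d = Ms d *m Ms c) -> w != 0 ->
  exists Q : 'M_n, (forall N, (forall c, N *m Ms c = Ms c *m N) -> N *m Q = Q *m N) /\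
    w *m Q != 0 /\ exists ks : seq nat, [/\ size ks = size L, all (fun j => j < 3)%N ks &
    forall i, (i < size L)%N -> (w *m Q) *m Ms (nth 0%N L i) = om ^+ nth 0%N ks i *: (w *m Q)].
Proof.
move=> h3 hc hw; elim: L => [|c L [Q [HQ [hQ [ks [sks aks eks]]]]]].
  exists 1%:M; split; first by move=> N _; rewrite mulmx1 mul1mx.
  by rewrite mulmx1; split => //; exists [::].
have [Q' [HQ' [hQ' [j [hj ej]]]]] := step (h3 c) hQ.
exists (Q *m Q'); split.
  by move=> N hN; rewrite mulmxA HQ // -!mulmxA HQ' // hN.
rewrite mulmxA; split => //; exists (j :: ks); split => //=; first by rewrite sks.
  by rewrite hj.
case=> [|i] /=; first by [].
rewrite ltnS => hi.
rewrite -(mulmxA (w *m Q)) -(HQ' _ (hc (nth 0%N L i) c)) mulmxA eks //.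
by rewrite -scalemxAl.
Qed.

Lemma X_cube n (rho : mx_representation CC G2 n) c : X rho c *m X rho c *m X rho c = 1%:M.
Proof.
rewrite /X -!rho_cat.
case: (ltnP c 7) => hc.
  have /allP := cube_checkT => /(_ c); rewrite mem_iota add0n => /(_ hc) /weqP.
  by rewrite -catA => ->; rewrite rho_nil.
by rewrite /xw nth_default //= rho_nil.
Qed.

Lemma X_comm n (rho : mx_representation CC G2 n) c d : X rho c *m X rho d = X rho d *m X rho c.
Proof.
rewrite /X -!rho_cat.
case: (ltnP c 7) => hc; last by rewrite /xw nth_default //= cats0.
case: (ltnP d 7) => hd; last by rewrite /xw (nth_default _ (_ : size xw_list <= d)%N) //= cats0.
have /allP := comm_checkT => /(_ c); rewrite mem_iota add0n => /(_ hc) /allP /(_ d).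
by rewrite mem_iota add0n => /(_ hd) /weqP ->.
Qed.

Lemma mem_allL n k : size k = n -> all (fun j => j < 3)%N k -> k \in allL n.
Proof.
elim: n k => [|n IH] [|a k] //= [sk] /andP[ha hk].
have hk' := IH _ sk hk.
rewrite !mem_cat; case: a ha => [|[|[|//]]] _;
  rewrite ?(map_f (fun l => _ :: l) hk') ?orbT //.
Qed.

Lemma X0_ne1 n (rho : mx_representation CC G2 n) : mx_faithful rho -> X rho 0 != 1%:M.
Proof.
move=> hf; apply/eqP => h.
have : wp (xw 0) \in rker rho by apply/rkerP; split => //; apply: wp_in.
move/(subsetP hf); rewrite inE => /eqP h1.
have := x0_ne1; rewrite -wpE h1 perm1 eqxx //.
Qed.

Definition okk (k : seq nat) := (size k == 7%N) && all (fun j => j < 3)%N k.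

Lemma exists_eig n (rho : mx_representation CC G2 n) : mx_faithful rho ->
  exists v : 'rV[CC]_n, exists k, [/\ v != 0, eigk rho v k, k \in allL 7, okk k & k != nseq 7 0%N].
Proof.
move=> hf.
have hne : X rho 0 - 1%:M != 0 by rewrite subr_eq0 X0_ne1.
have [i hi] : exists i, row i (X rho 0 - 1%:M) != 0.
  apply/existsP; move: hne; apply: contraR; rewrite negb_exists => /forallP h.
  by apply/eqP/row_matrixP => i; rewrite row0; apply/eqP; move: (h i); rewrite negbK.
set u := row i _ in hi.
have hu : u *m (X rho 0 *m X rho 0 + X rho 0 + 1%:M) = 0.
  rewrite /u rowE -mulmxA; apply/eqP; rewrite -[X in _ == X](mulmx0 _ (delta_mx 0 i)); apply/eqP; congr (_ *m _).
  rewrite mulmxBl mul1mx !mulmxDr mulmx1 !mulmxA X_cube.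
  by apply/eqP; rewrite subr_eq0 -addrA addrC.
have [Q0 [HQ0 [hQ0 [j0 [j0p j03 ej0]]]]] := step' hi hu.
have [Q [HQ [hQ [ks [sks aks eks]]]]] :=
  refine (iota 1 6) (X_cube rho) (X_comm rho) hQ0.
exists (u *m Q0 *m Q), (j0 :: ks); split => //.
- apply/allP => c; rewrite mem_iota add0n; case: c => [|c] hc /=.
    by apply/eqP; rewrite -(mulmxA (u *m Q0)) -(HQ _ (X_comm rho 0)) mulmxA ej0 -scalemxAl.
  have := eks c; rewrite size_iota nth_iota // => -> //.
- apply: mem_allL => /=; first by rewrite sks size_iota.
  by rewrite j03 aks.
- by rewrite /okk /= sks size_iota j03 aks.
- by rewrite /= eqseq_cons negb_and -lt0n j0p.
Qed.

Import GRing.Theory Num.Theory.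
Local Open Scope ring_scope.

Lemma coef a j : (a < 3)%N -> (j < 3)%N ->
  3^-1 * (1 + om ^+ (2 * j + a)%N + om ^+ (4 * j + 2 * a)%N) = (a == j)%:R.
Proof.
have h3 : (3 : CC) != 0 by rewrite pnatr_eq0.
have s1 : 1 + om + om' = 0 by rewrite -om_sum; ring.
have s2 : 1 + om' + om = 0 by rewrite -om_sum; ring.
move=> ha hj; rewrite (om_mod (2 * j + a)) (om_mod (4 * j + 2 * a)).
case: a ha => [|[|[|//]]] _; case: j hj => [|[|[|//]]] _ /=;
  rewrite ?expr0 ?expr1 ?om2' ?s1 ?s2 ?mulr0 //.
all: have e3 : (1 + 1 + 1 : CC) = 3%:R by ring.
all: by rewrite e3 mulVf.
Qed.

Definition Ep n (rho : mx_representation CC G2 n) c j : 'M[CC]_n :=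
  3^-1 *: (1%:M + om ^+ (2 * j)%N *: X rho c + om ^+ (4 * j)%N *: (X rho c *m X rho c)).

Lemma vE n (rho : mx_representation CC G2 n) (v : 'rV[CC]_n) c a j :
  (a < 3)%N -> (j < 3)%N -> v *m X rho c = om ^+ a *: v ->
  v *m Ep rho c j = (a == j)%:R *: v.
Proof.
move=> ha hj hv.
rewrite /Ep -scalemxAr !mulmxDr mulmx1 -!scalemxAr mulmxA hv -scalemxAl hv !scalerA.
rewrite -coef // -{1}[v]scale1r -!scalerDl scalerA.
congr (_ *: _); congr (_ * _); congr (_ + _ + _); rewrite -!exprD; congr (_ ^+ _).
by rewrite mul2n -addnn addnA.
Qed.

Definition Pk n (rho : mx_representation CC G2 n) (k : seq nat) : 'M[CC]_n :=
  foldr (fun c M => Ep rho c (nth 0%N k c) *m M) 1%:M (iota 0 7).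

Lemma vPk n (rho : mx_representation CC G2 n) (v : 'rV[CC]_n) k k' :
  okk k -> okk k' -> eigk rho v k' -> v *m Pk rho k = (k' == k)%:R *: v.
Proof.
move=> /andP[/eqP sk ak] /andP[/eqP sk' ak'] /allP hv.
have key : forall l, {subset l <= iota 0 7} ->
  v *m foldr (fun c M => Ep rho c (nth 0%N k c) *m M) 1%:M l =
  (all (fun c => nth 0%N k' c == nth 0%N k c) l)%:R *: v.
  elim=> [|c l IH] hl /=; first by rewrite mulmx1 scale1r.
  have hc : c \in iota 0 7 by apply: hl; rewrite mem_head.
  move: (hc); rewrite mem_iota add0n => hc'.
  rewrite mulmxA (vE _ _ (eqP (hv c hc))); first last.
  - by apply: (allP ak); rewrite mem_nth // sk.
  - by apply: (allP ak'); rewrite mem_nth // sk'.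
  rewrite -scalemxAl IH; last by move=> d dl; apply: hl; rewrite inE dl orbT.
  by rewrite scalerA -natrM mulnb.
rewrite /Pk key //; congr (_%:R *: _); congr (nat_of_bool _); apply/idP/idP.
  move/allP => h; apply/eqP/(eq_from_nth (x0 := 0%N)); first by rewrite sk sk'.
  by move=> i; rewrite sk' => hi; apply/eqP/h; rewrite mem_iota.
by move/eqP ->; apply/allP => c _.
Qed.

Lemma bound n (rho : mx_representation CC G2 n) (Ks : seq (seq nat)) :
  uniq Ks -> all okk Ks ->
  (forall k, k \in Ks -> exists v : 'rV[CC]_n, (v != 0) && eigk rho v k) ->
  (size Ks <= n)%N.
Proof.
move=> uK oK hK.
pose m := size Ks.
have H' : forall i : 'I_m, exists v : 'rV[CC]_n, (v != 0) && eigk rho v (nth [::] Ks i).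
  by move=> i; apply: hK; rewrite mem_nth.
pose V := \matrix_(i < m) xchoose (H' i).
have hV : forall i, (row i V != 0) && eigk rho (row i V) (nth [::] Ks i).
  by move=> i; rewrite rowK; exact: (xchooseP (H' i)).
have okn : forall i : 'I_m, okk (nth [::] Ks i) by move=> i; apply: (allP oK); rewrite mem_nth.
have : row_free V.
  rewrite -kermx_eq0.
  apply/negPn/negP => /rowV0Pn [u /sub_kermxP hu unz].
  move/negP: unz; apply; apply/eqP/rowP => j; rewrite mxE.
  have := congr1 (fun A => A *m Pk rho (nth [::] Ks j)) hu.
  rewrite mul0mx (mulmx_sum_row u V) mulmx_suml (bigD1 j) //= big1.
    rewrite addr0 -scalemxAl; case/andP: (hV j) => nz ej.
    rewrite (vPk (okn j) (okn j) ej) eqxx scale1r => /eqP.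
    by rewrite scalemx_eq0 (negbTE nz) orbF => /eqP.
  move=> i hij; rewrite -scalemxAl; case/andP: (hV i) => _ ei.
  rewrite (vPk (okn j) (okn i) ei) nth_uniq //.
  by move: hij; rewrite -(inj_eq val_inj) /= => /negbTE ->; rewrite scale0r scaler0.
rewrite /row_free => /eqP h; rewrite -[size Ks]/m -h; exact: rank_leq_col.
Qed.

Import GRing.Theory Num.Theory.
Local Open Scope ring_scope.

Lemma okk_act g k : okk (act g k).
Proof.
rewrite /okk size_map size_iota eqxx andTb.
by apply/allP => x /mapP [c _ ->]; rewrite ltn_pmod.
Qed.

Lemma okk_actw w k : okk k -> okk (actw w k).
Proof. by elim: w k => [|g w IH] k //= _; apply: IH; apply: okk_act. Qed.

Lemma W14_ok : all (all (fun g => g < 6)%N) W14.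
Proof. by []. Qed.

Lemma lowerC m (rho : mx_representation CC G2 m) : mx_faithful rho -> (8 <= m)%N.
Proof.
move=> hf; have [v [k [vnz ek kL kok knz]]] := exists_eig hf.
have /allP /(_ k kL) := comb_checkT; rewrite (negbTE knz) orFb => /andP[h8 _].
apply: leq_trans h8 _; apply: bound; first exact: undup_uniq.
  by apply/allP => k' /[!mem_undup] /mapP [w _ ->]; apply: okk_actw.
move=> k' /[!mem_undup] /mapP [w hw ->]; exists (v *m rho (wp w)).
rewrite nz_mulrho //=; apply: actw_eig => //.
by apply: (allP W14_ok).
Qed.

Import GRing.Theory Num.Theory.
Local Open Scope ring_scope.

Definition rC (x : RR) : CC := Complex x 0.

Lemma rC_additive : additive rC.
Proof. by move=> x y; rewrite /rC; congr Complex; rewrite subr0. Qed.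
Lemma rC_mult : multiplicative rC.
Proof.
split; last by [].
move=> x y; rewrite /rC -[(_ +i* _)%C * (_ +i* _)%C]/(_ +i* _)%C.
by congr Complex; rewrite ?mulr0 ?mul0r ?subr0 ?addr0.
Qed.
HB.instance Definition _ := GRing.isAdditive.Build RR CC rC rC_additive.
HB.instance Definition _ := GRing.isMultiplicative.Build RR CC rC rC_mult.

Lemma cplx_repr m (rhoR : mx_representation RR G2 m) :
  mx_repr G2 (fun g => map_mx rC (rhoR g)).
Proof.
split; first by rewrite repr_mx1 map_mx1.
by move=> x y hx hy /=; rewrite repr_mxM // map_mxM.
Qed.

Definition cplx m (rhoR : mx_representation RR G2 m) := MxRepresentation (cplx_repr rhoR).

Lemma cplx_faithful m (rhoR : mx_representation RR G2 m) :
  mx_faithful rhoR -> mx_faithful (cplx rhoR).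
Proof.
move=> hf; apply/subsetP => g /rkerP [hg h]; apply: (subsetP hf); apply/rkerP; split => //.
by apply: (@map_mx_inj _ _ rC); rewrite map_mx1.
Qed.

Lemma conjc_rC (x : RR) : conjc (rC x) = rC x.
Proof. by rewrite /rC /conjc oppr0. Qed.

Lemma conj_eig m (rhoR : mx_representation RR G2 m) (v : 'rV[CC]_m) k :
  okk k -> eigk (cplx rhoR) v k -> eigk (cplx rhoR) (map_mx conjc v) (negk k).
Proof.
move=> /andP[/eqP sk _] /allP hv; apply/allP => c hc; apply/eqP.
have hc' : (c < 7)%N by move: hc; rewrite mem_iota.
have e : map_mx conjc (X (cplx rhoR) c) = X (cplx rhoR) c.
  by apply/matrixP => i j; rewrite !mxE conjc_rC.
rewrite -e -map_mxM (eqP (hv c hc)) map_mxZ rmorphXn -[X in X ^+ _]/(conjc om) conj_om.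
rewrite /negk (nth_map 0%N) ?sk // -om_mod exprM om2'.
by [].
Qed.

Lemma conj_nz m (v : 'rV[CC]_m) : v != 0 -> map_mx conjc v != 0.
Proof.
move=> hv; apply: contraNneq hv => h; apply/eqP/matrixP => i j.
move/matrixP: h => /(_ i j); rewrite !mxE => /eqP.
by rewrite conjc_eq0 => /eqP.
Qed.

Lemma lowerR m (rhoR : mx_representation RR G2 m) : mx_faithful rhoR -> (16 <= m)%N.
Proof.
move=> hf; set rho := cplx rhoR.
have [v [k [vnz ek kL kok knz]]] := exists_eig (cplx_faithful hf).
have /allP /(_ k kL) := comb_checkT; rewrite (negbTE knz) orFb => /andP[_ h16].
apply: leq_trans h16 _; apply: (bound (rho := rho)); first exact: undup_uniq.
  apply/allP => k' /[!mem_undup]; rewrite mem_cat => /orP[] /mapP [w hw ->].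
    by apply: okk_actw.
  move/mapP: hw => [w' _ ->].
  rewrite /okk /negk size_map.
  by case/andP: (okk_actw w' kok) => -> _ /=; apply/allP => x /mapP [y _ ->]; rewrite ltn_pmod.
move=> k' /[!mem_undup]; rewrite mem_cat => /orP[] /mapP [w hw ->].
  exists (v *m rho (wp w)); rewrite nz_mulrho //=; apply: actw_eig => //.
  by apply: (allP W14_ok).
move/mapP: hw => [w' hw' ->].
exists (map_mx conjc (v *m rho (wp w'))); rewrite conj_nz ?nz_mulrho //=.
apply: conj_eig; first exact: okk_actw.
by apply: actw_eig => //; apply: (allP W14_ok).
Qed.

Local Close Scope ring_scope.
Import GRing.Theory Num.Theory.

Definition evc (c : bool * bool * bool) : bool := ~~ (c.1.1 (+) c.1.2 (+) c.2).
Definition ori (s : sticker) : nat := if evc s.1 then val s.2 else (3 - val s.2) %% 3.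
Definition goodf (f : sticker -> sticker) (s : sticker) : bool :=
  ((f s).1 == (f (s.1, ax0)).1) && (ori (f s) == (ori (f (s.1, ax0)) + ori s) %% 3).
Definition goodb (g : {perm sticker}) := [forall s, goodf g s].

Lemma good_moves : all (fun i => all (goodf (move_fun (gm i).1 (gm i).2)) stk) (iota 0 6).
Proof. vm_compute. reflexivity. Qed.

Lemma ori_lt s : ori s < 3.
Proof. by rewrite /ori; case: ifP => _; [apply: ltn_ord | rewrite ltn_pmod]. Qed.

Lemma ori0 c : ori (c, ax0) = 0.
Proof. by rewrite /ori; case: ifP. Qed.

Lemma good1 : goodb 1.
Proof. by apply/forallP => s; rewrite /goodf !perm1 eqxx ori0 add0n modn_small ?ori_lt /=. Qed.

Lemma goodM g h : goodb g -> goodb h -> goodb (g * h).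
Proof.
move=> /forallP hg /forallP hh; apply/forallP => s; rewrite /goodf !permM.
case/andP: (hg s) => /eqP g1 /eqP g2.
case/andP: (hh (g s)) => /eqP h1 /eqP h2.
case/andP: (hh (g (s.1, ax0))) => /eqP h1' /eqP h2'.
rewrite h1 h1' g1 eqxx /= h2 h2' g1 g2.
by rewrite modnDmr modnDml addnA.
Qed.

Lemma good_group_set : group_set [set g | goodb g].
Proof.
apply/group_setP; split; first by rewrite inE good1.
by move=> x y; rewrite !inE; apply: goodM.
Qed.

Definition GoodG := Group good_group_set.

Lemma G2_good g : g \in G2 -> goodb g.
Proof.
have : G2 \subset GoodG.
  rewrite /G2 gen_subG; apply/subsetP => x.
  have gm_good : forall i, (i < 6)%N -> goodb (move (gm i).1 (gm i).2).
    move=> i hi; apply/forallP => s.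
    have := good_moves => /allP /(_ i); rewrite mem_iota add0n => /(_ hi) /allP /(_ s (stkP s)).
    by rewrite /goodf !permE.
  rewrite !inE -!orbA => /or4P [/eqP->|/eqP->|/eqP->|/orP[/eqP->|/orP[/eqP->|/eqP->]]].
  - exact: (gm_good 0%N isT).
  - exact: (gm_good 1%N isT).
  - exact: (gm_good 2%N isT).
  - exact: (gm_good 3%N isT).
  - exact: (gm_good 4%N isT).
  - exact: (gm_good 5%N isT).
by move/subsetP => h /h; rewrite inE.
Qed.

Local Open Scope ring_scope.

Definition clist : seq (bool * bool * bool) :=
  [:: (false,false,false); (false,false,true); (false,true,false); (false,true,true);
      (true,false,false); (true,false,true); (true,true,false); (true,true,true)].
Definition cor (i : 'I_8) := nth (false,false,false) clist i.
Definition cidx (c : bool * bool * bool) : 'I_8 := inord (index c clist).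
Lemma corK c : cor (cidx c) = c.
Proof. by case: c => -[[] []] []; rewrite /cidx /cor inordK. Qed.
Lemma cidxK i : cidx (cor i) = i.
Proof. by apply: val_inj; case: i => -[|[|[|[|[|[|[|[|//]]]]]]]] ?; rewrite /= inordK. Qed.

Definition rCm (g : {perm sticker}) : 'M[CC]_8 :=
  \matrix_(i, j) (if cidx (g (cor i, ax0)).1 == j then om ^+ ori (g (cor i, ax0)) else 0).

Lemma rCm1 : rCm 1 = 1%:M.
Proof.
apply/matrixP => i j; rewrite !mxE perm1 /= cidxK ori0 expr0.
by case: (i == j).
Qed.

Lemma rCmM g h : g \in G2 -> h \in G2 -> rCm (g * h) = rCm g *m rCm h.
Proof.
move=> /G2_good /forallP hg /G2_good /forallP hh.
apply/matrixP => i k; rewrite !mxE.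
rewrite (bigD1 (cidx (g (cor i, ax0)).1)) //= big1 ?addr0; last first.
  by move=> j hj; rewrite !mxE eq_sym (negbTE hj) mul0r.
rewrite !mxE eqxx corK permM.
set s := g (cor i, ax0).
case/andP: (hh s) => /eqP h1 /eqP h2.
rewrite h1 h2 -om_mod exprD mulrC.
by case: ifP => _; rewrite ?mulr0.
Qed.

Lemma rCm_repr : mx_repr G2 rCm.
Proof. by split; [exact: rCm1 | move=> x y hx hy; exact: rCmM]. Qed.

Definition rCrep := MxRepresentation rCm_repr.

Lemma om'_ne1 : om' != 1.
Proof.
apply/eqP => -[h _].
have : (- 2^-1 : RR) < 0 by rewrite oppr_lt0 invr_gt0 ltr0n.
by rewrite h ltr10.
Qed.

Lemma sticker_eq (x y : sticker) : x.1 = y.1 -> ori x = ori y -> x = y.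
Proof.
case: x y => c a [d b] /= -> {c}; rewrite /ori /=.
have e : forall a b : 'I_3, val a = val b -> a = b by move=> ? ? /val_inj.
case: (evc d); first by move/e ->.
by case: a b => -[|[|[|//]]] ? [[|[|[|//]]] ?] //= _; congr (_, _); apply: val_inj.
Qed.

Lemma rCfaith : mx_faithful rCrep.
Proof.
apply/subsetP => g /rkerP [hg h]; rewrite inE; apply/eqP/permP => s; rewrite perm1.
have hi : forall i, (g (cor i, ax0)).1 = cor i /\ ori (g (cor i, ax0)) = 0%N.
  move=> i; move/matrixP: h => /(_ i i); rewrite !mxE eqxx /=.
  case: eqP => [hc e|_]; last by move/eqP; rewrite eq_sym oner_eq0.
  split; first by rewrite -[in RHS]hc corK.
  move: e (ori_lt (g (cor i, ax0))).
  case: (ori _) => [|[|[|//]]] //=.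
    by rewrite expr1 => /eqP; rewrite (negbTE om_ne1).
  by rewrite om2' => /eqP; rewrite (negbTE om'_ne1).
case: s => c a; have [h1 h2] := hi (cidx c); rewrite corK in h1 h2.
have /forallP /(_ (c, a)) /andP [/eqP e1 /eqP e2] := G2_good hg.
apply: sticker_eq; first by rewrite e1 /= h1.
by rewrite e2 /= h2 add0n modn_small // ori_lt.
Qed.

Import GRing.Theory Num.Theory.
Local Open Scope ring_scope.
Local Notation Re := (@complex.Re RR).
Local Notation Im := (@complex.Im RR).

Lemma Re_add (a b : CC) : Re (a + b) = Re a + Re b. Proof. by case: a b => a1 a2 [b1 b2]. Qed.
Lemma Im_add (a b : CC) : Im (a + b) = Im a + Im b. Proof. by case: a b => a1 a2 [b1 b2]. Qed.
Lemma Re_mul (a b : CC) : Re (a * b) = Re a * Re b - Im a * Im b. Proof. by case: a b => a1 a2 [b1 b2]. Qed.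
Lemma Im_mul (a b : CC) : Im (a * b) = Re a * Im b + Im a * Re b. Proof. by case: a b => a1 a2 [b1 b2]. Qed.

Lemma Re_sum n (F : 'I_n -> CC) : Re (\sum_i F i) = \sum_i Re (F i).
Proof. by apply: (big_morph Re) => //; exact: Re_add. Qed.
Lemma Im_sum n (F : 'I_n -> CC) : Im (\sum_i F i) = \sum_i Im (F i).
Proof. by apply: (big_morph Im) => //; exact: Im_add. Qed.

Lemma ReM n (A B : 'M[CC]_n) :
  map_mx Re (A *m B) = map_mx Re A *m map_mx Re B - map_mx Im A *m map_mx Im B.
Proof.
apply/matrixP => i j; rewrite !mxE Re_sum -sumrB; apply: eq_bigr => k _.
by rewrite Re_mul !mxE.
Qed.

Lemma ImM n (A B : 'M[CC]_n) :
  map_mx Im (A *m B) = map_mx Re A *m map_mx Im B + map_mx Im A *m map_mx Re B.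
Proof.
apply/matrixP => i j; rewrite !mxE Im_sum -big_split; apply: eq_bigr => k _.
by rewrite Im_mul !mxE.
Qed.

Lemma realifyM n (A B : 'M[CC]_n) : realify_mx (A *m B) = realify_mx A *m realify_mx B.
Proof.
rewrite /realify_mx mulmx_block ReM ImM.
rewrite !mulmxN !mulNmx.
congr block_mx.
- by rewrite opprD.
- by rewrite addrC.
- by rewrite addrC.
Qed.

Lemma realify1 n : realify_mx (1%:M : 'M[CC]_n) = 1%:M.
Proof.
have e1 : map_mx Re (1%:M : 'M[CC]_n) = 1%:M.
  by apply/matrixP => i j; rewrite !mxE; case: (i == j).
have e2 : map_mx Im (1%:M : 'M[CC]_n) = 0.
  by apply/matrixP => i j; rewrite !mxE; case: (i == j).
by rewrite /realify_mx e1 e2 oppr0 scalar_mx_block.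
Qed.

Lemma realify_inj n (A B : 'M[CC]_n) : realify_mx A = realify_mx B -> A = B.
Proof.
rewrite /realify_mx => h.
have h1 := congr1 ulsubmx h; have h2 := congr1 dlsubmx h.
rewrite !block_mxKul in h1; rewrite !block_mxKdl in h2.
apply/matrixP => i j.
move/matrixP: h1 => /(_ i j); move/matrixP: h2 => /(_ i j); rewrite !mxE.
by case: (A i j) (B i j) => ? ? [] ? ? /= -> ->.
Qed.

Import GRing.Theory Num.Theory.
Local Open Scope ring_scope.

Lemma rR_repr : mx_repr G2 (fun g => realify_mx (rCrep g)).
Proof.
split; first by rewrite repr_mx1 realify1.
by move=> x y hx hy; rewrite (repr_mxM rCrep) // realifyM.
Qed.

Definition rRrep : mx_representation RR G2 (8 + 8) := MxRepresentation rR_repr.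

Lemma rRfaith : mx_faithful rRrep.
Proof.
apply/subsetP => g /rkerP [hg h]; apply: (subsetP rCfaith); apply/rkerP; split => //.
by apply: realify_inj; rewrite realify1.
Qed.

Theorem theorem5p1 :
  is_mdim CC G2 8 /\ is_mdim RR G2 16 /\
  exists rC : mx_representation CC G2 8,
    mx_faithful rC /\
    exists rR : mx_representation RR G2 (8 + 8),
      mx_faithful rR /\ forall g, g \in G2 -> rR g = realify_mx (rC g).
Proof.
split.
  split; first by exists rCrep; exact: rCfaith.
  by move=> m hm [rho hf]; have := lowerC hf; rewrite leqNgt hm.
split.
  split; first by exists rRrep; exact: rRfaith.
  by move=> m hm [rho hf]; have := lowerR hf; rewrite leqNgt hm.
exists rCrep; split; first exact: rCfaith.
by exists rRrep; split; [exact: rRfaith | move=> g _].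
Qed.
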